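(* Let $X$ be a Dedekind complete Riesz space with weak order unit $e$ and $T$ a conditional expectation with $Te=e$. For a net $(x_{\alpha})_{\alpha\in A}$ in $X$ and $x\in X$, the following are equivalent: (i) $x_{\alpha}\to x$ in $T$-conditional probability; (ii) $T(|x_{\alpha}-x|\wedge u)\xrightarrow{o}0$ for every $u\in X_{+}$; (iii) $T(|x_{\alpha}-x|\wedge e)\xrightarrow{o}0$.
   Context: A conditional expectation operator on $X$ is a strictly positive, order continuous linear projection $T$ with $Te=e$ whose range is a Dedekind complete Riesz subspace. $\xrightarrow{o}$ denotes order convergence: $y_\alpha\xrightarrow{o}y$ if there is a net $z_\beta\downarrow0$ such that for every $\beta$ there is $\alpha_0$ with $|y_\alpha-y|\le z_\beta$ for all $\alpha\ge\alpha_0$. $x_\alpha\to x$ in $T$-conditional probability means $TP_{(|x_\alpha-x|-\epsilon e)^{+}}e\xrightarrow{o}0$ for every $\epsilon>0$, where $P_y$ is the band projection onto the band generated by $y$. *)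

(* Defs.v *)
From Stdlib Require Import Reals ClassicalEpsilon.
Open Scope R_scope.

Record riesz := RieszSpace {
  car :> Type;
  rzero : car;
  radd : car -> car -> car;
  ropp : car -> car;
  rscal : R -> car -> car;
  rle : car -> car -> Prop;
  rsup : car -> car -> car;
  rinf : car -> car -> car;
  raddA : forall x y z, radd x (radd y z) = radd (radd x y) z;
  raddC : forall x y, radd x y = radd y x;
  radd0 : forall x, radd x rzero = x;
  raddN : forall x, radd x (ropp x) = rzero;
  rscalA : forall a b x, rscal a (rscal b x) = rscal (a * b) x;
  rscal1 : forall x, rscal 1 x = x;
  rscalDr : forall a x y, rscal a (radd x y) = radd (rscal a x) (rscal a y);
  rscalDl : forall a b x, rscal (a + b) x = radd (rscal a x) (rscal b x);
  rle_refl : forall x, rle x x;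
  rle_trans : forall x y z, rle x y -> rle y z -> rle x z;
  rle_anti : forall x y, rle x y -> rle y x -> x = y;
  rle_add : forall x y z, rle x y -> rle (radd x z) (radd y z);
  rle_scal : forall a x y, 0 <= a -> rle x y -> rle (rscal a x) (rscal a y);
  rsup_ub1 : forall x y, rle x (rsup x y);
  rsup_ub2 : forall x y, rle y (rsup x y);
  rsup_lub : forall x y z, rle x z -> rle y z -> rle (rsup x y) z;
  rinf_lb1 : forall x y, rle (rinf x y) x;
  rinf_lb2 : forall x y, rle (rinf x y) y;
  rinf_glb : forall x y z, rle z x -> rle z y -> rle z (rinf x y)
}.

Arguments rzero {r}.

Section RieszDefs.
Variable X : riesz.

Definition rsub (x y : X) : X := radd X x (ropp X y).
Definition rpos (x : X) : X := rsup X x rzero.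
Definition rabs (x : X) : X := rsup X x (ropp X x).

Definition is_sup (S : X -> Prop) (s : X) : Prop :=
  (forall y, S y -> rle X y s) /\ (forall u, (forall y, S y -> rle X y u) -> rle X s u).
Definition is_inf (S : X -> Prop) (s : X) : Prop :=
  (forall y, S y -> rle X s y) /\ (forall u, (forall y, S y -> rle X u y) -> rle X u s).

Definition dedekind_complete : Prop :=
  forall S : X -> Prop, (exists x, S x) -> (exists u, forall y, S y -> rle X y u) ->
  exists s, is_sup S s.

Definition subspace (V : X -> Prop) : Prop :=
  V rzero /\ (forall x y, V x -> V y -> V (radd X x y)) /\
  (forall a x, V x -> V (rscal X a x)).

Definition ideal (I : X -> Prop) : Prop :=
  subspace I /\ (forall x y, I x -> rle X (rabs y) (rabs x) -> I y).
Definition band (B : X -> Prop) : Prop :=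
  ideal B /\ (forall (S : X -> Prop) s, (forall y, S y -> B y) -> is_sup S s -> B s).

Definition band_gen (y : X) : X -> Prop :=
  fun z => forall B, band B -> B y -> B z.

Definition disjoint (x y : X) : Prop := rinf X (rabs x) (rabs y) = rzero.
Definition dcompl (B : X -> Prop) : X -> Prop := fun x => forall b, B b -> disjoint x b.

Definition weak_unit (e : X) : Prop := rle X rzero e /\ forall x, band_gen e x.

(* band projection onto B: P x is the component in B of the decomposition
   x = p + (x - p), p in B, x - p in B^d (exists and is unique for projection bands) *)
Definition band_proj (B : X -> Prop) (x : X) : X :=
  epsilon (inhabits (@rzero X)) (fun p => B p /\ dcompl B (rsub x p)).

Definition P (y : X) : X -> X := band_proj (band_gen y).

End RieszDefs.

Arguments rsub {X}. Arguments rpos {X}. Arguments rabs {X}.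
Arguments is_sup {X}. Arguments is_inf {X}. Arguments P {X}.

Record directed := Directed {
  dcar :> Type;
  dle : dcar -> dcar -> Prop;
  dle_refl : forall a, dle a a;
  dle_trans : forall a b c, dle a b -> dle b c -> dle a c;
  dinh : inhabited dcar;
  dup : forall a b, exists c, dle a c /\ dle b c
}.

Section Nets.
Variable X : riesz.

Definition decr_to_zero (B : directed) (z : B -> X) : Prop :=
  (forall b b', dle B b b' -> rle X (z b') (z b)) /\
  is_inf (fun w => exists b, w = z b) rzero.

Definition oconv (A : directed) (y : A -> X) (l : X) : Prop :=
  exists (B : directed) (z : B -> X), decr_to_zero B z /\
    forall b, exists a0, forall a, dle A a0 a -> rle X (rabs (rsub (y a) l)) (z b).

Definition range (T : X -> X) : X -> Prop := fun y => exists x, y = T x.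

Definition riesz_subspace (V : X -> Prop) : Prop :=
  subspace X V /\ (forall x y, V x -> V y -> V (rsup X x y)) /\
  (forall x y, V x -> V y -> V (rinf X x y)).

Definition dedekind_complete_in (V : X -> Prop) : Prop :=
  forall S : X -> Prop, (forall y, S y -> V y) -> (exists x, S x) ->
  (exists u, V u /\ forall y, S y -> rle X y u) ->
  exists s, V s /\ (forall y, S y -> rle X y s) /\
            (forall u, V u -> (forall y, S y -> rle X y u) -> rle X s u).

Definition linear_op (T : X -> X) : Prop :=
  (forall x y, T (radd X x y) = radd X (T x) (T y)) /\
  (forall a x, T (rscal X a x) = rscal X a (T x)).

Definition strictly_positive (T : X -> X) : Prop :=
  (forall x, rle X rzero x -> rle X rzero (T x)) /\
  (forall x, rle X rzero x -> x <> rzero -> T x <> rzero).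

Definition order_continuous (T : X -> X) : Prop :=
  forall (A : directed) (y : A -> X), oconv A y rzero -> oconv A (fun a => T (y a)) rzero.

Definition cond_exp (T : X -> X) (e : X) : Prop :=
  linear_op T /\ strictly_positive T /\ order_continuous T /\
  (forall x, T (T x) = T x) /\ T e = e /\
  riesz_subspace (range T) /\ dedekind_complete_in (range T).

Definition cp_conv (T : X -> X) (e : X) (A : directed) (x : A -> X) (l : X) : Prop :=
  forall eps, 0 < eps ->
    oconv A (fun a => T (P (rpos (rsub (rabs (rsub (x a) l)) (rscal X eps e))) e)) rzero.

End Nets.

Arguments oconv {X}. Arguments cond_exp {X}. Arguments cp_conv {X}.
Arguments dedekind_complete : clear implicits.

(* Main.v *)
Require Import Defs.
From Stdlib Require Import Reals Lra Lia ClassicalEpsilon.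
Open Scope R_scope.
Arguments raddA {r}.
Arguments raddC {r}.
Arguments radd0 {r}.
Arguments raddN {r}.
Arguments rscalA {r}.
Arguments rscal1 {r}.
Arguments rscalDr {r}.
Arguments rscalDl {r}.
Arguments rle_refl {r}.
Arguments rle_trans {r}.
Arguments rle_anti {r}.
Arguments rle_add {r}.
Arguments rle_scal {r}.
Arguments rsup_ub1 {r}.
Arguments rsup_ub2 {r}.
Arguments rsup_lub {r}.
Arguments rinf_lb1 {r}.
Arguments rinf_lb2 {r}.
Arguments rinf_glb {r}.

Section Basic.
Variable X : riesz.
Notation "x ⊕ y" := (radd X x y) (at level 50, left associativity).
Notation "x ⊖ y" := (rsub x y) (at level 50, left associativity).
Notation "a ⊙ x" := (rscal X a x) (at level 40).
Notation "x ≼ y" := (rle X x y) (at level 70).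
Notation "x ⊔ y" := (rsup X x y) (at level 45, left associativity).
Notation "x ⊓ y" := (rinf X x y) (at level 45, left associativity).
Notation opp := (ropp X).
Notation "0x" := (@rzero X).

Lemma add0l x : 0x ⊕ x = x.
Proof. rewrite raddC; apply radd0. Qed.
Lemma addNl x : opp x ⊕ x = 0x.
Proof. rewrite raddC; apply raddN. Qed.
Lemma addK x y : x ⊕ y ⊕ opp y = x.
Proof. rewrite <- raddA, raddN; apply radd0. Qed.
Lemma addNK x y : x ⊕ opp y ⊕ y = x.
Proof. rewrite <- raddA, addNl; apply radd0. Qed.
Lemma add_cancel x y z : x ⊕ z = y ⊕ z -> x = y.
Proof. intro H. rewrite <- (addK x z), <- (addK y z), H. reflexivity. Qed.
Lemma add_cancel_l x y z : z ⊕ x = z ⊕ y -> x = y.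
Proof. rewrite (raddC z x), (raddC z y). apply add_cancel. Qed.
Lemma opp_unique x y : x ⊕ y = 0x -> y = opp x.
Proof. intro H. apply (add_cancel_l _ _ x). rewrite H, raddN. reflexivity. Qed.
Lemma opp_opp x : opp (opp x) = x.
Proof. symmetry. apply opp_unique. apply addNl. Qed.
Lemma opp0 : opp 0x = 0x.
Proof. symmetry; apply opp_unique; apply radd0. Qed.
Lemma opp_add x y : opp (x ⊕ y) = opp x ⊕ opp y.
Proof. symmetry. apply opp_unique.
  rewrite (raddC (opp x)), raddA, <- (raddA x y), raddN, radd0, raddN. reflexivity. Qed.
Lemma sub0 x : x ⊖ 0x = x.
Proof. unfold rsub. rewrite opp0. apply radd0. Qed.
Lemma subxx x : x ⊖ x = 0x.
Proof. apply raddN. Qed.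
Lemma scal0 x : 0 ⊙ x = 0x.
Proof. apply (add_cancel _ _ (0 ⊙ x)). rewrite add0l, <- rscalDl. f_equal; ring. Qed.
Lemma scalx0 a : a ⊙ 0x = 0x.
Proof. apply (add_cancel _ _ (a ⊙ 0x)). rewrite add0l, <- rscalDr, radd0. reflexivity. Qed.
Lemma scalN1 x : (-1) ⊙ x = opp x.
Proof. apply opp_unique. rewrite <- (rscal1 x) at 1. rewrite <- rscalDl.
  replace (1 + -1) with 0 by ring. apply scal0. Qed.
Lemma scal_opp a x : a ⊙ opp x = opp (a ⊙ x).
Proof. rewrite <- scalN1, <- scalN1, !rscalA. f_equal; ring. Qed.
Lemma opp_scal a x : (- a) ⊙ x = opp (a ⊙ x).
Proof. rewrite <- scalN1, rscalA. f_equal; ring. Qed.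
Lemma scal_sub a x y : a ⊙ (x ⊖ y) = a ⊙ x ⊖ a ⊙ y.
Proof. unfold rsub. rewrite rscalDr, scal_opp. reflexivity. Qed.
Lemma opp_sub x y : opp (x ⊖ y) = y ⊖ x.
Proof. unfold rsub. rewrite opp_add, opp_opp, raddC. reflexivity. Qed.
Lemma sub_add x y : x ⊖ y ⊕ y = x.
Proof. apply addNK. Qed.
Lemma add_sub x y : x ⊕ y ⊖ y = x.
Proof. apply addK. Qed.

Lemma le_add2r x y z : x ⊕ z ≼ y ⊕ z -> x ≼ y.
Proof. intro H. rewrite <- (addK x z), <- (addK y z). apply rle_add, H. Qed.
Lemma le_addl x y z : x ≼ y -> z ⊕ x ≼ z ⊕ y.
Proof. rewrite (raddC z x), (raddC z y). apply rle_add. Qed.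
Lemma le_add x y z w : x ≼ y -> z ≼ w -> x ⊕ z ≼ y ⊕ w.
Proof. intros H1 H2. apply rle_trans with (y ⊕ z). apply rle_add, H1. apply le_addl, H2. Qed.
Lemma le_sub x y : x ≼ y -> 0x ≼ y ⊖ x.
Proof. intro H. rewrite <- (raddN x). apply rle_add, H. Qed.
Lemma sub_le x y : 0x ≼ y ⊖ x -> x ≼ y.
Proof. intro H. rewrite <- (add0l x), <- (sub_add y x). apply rle_add, H. Qed.
Lemma le_opp x y : x ≼ y -> opp y ≼ opp x.
Proof. intro H. apply le_add2r with (x ⊕ y).
  rewrite (raddC x y) at 1. rewrite raddA, addNl, add0l, raddA, addNl, add0l. exact H. Qed.
Lemma le_opp_inv x y : opp y ≼ opp x -> x ≼ y.
Proof. intro H. rewrite <- (opp_opp x), <- (opp_opp y). apply le_opp, H. Qed.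
Lemma le_scal_r a b x : a <= b -> 0x ≼ x -> a ⊙ x ≼ b ⊙ x.
Proof. intros Hab Hx. apply sub_le. unfold rsub. rewrite <- opp_scal, <- rscalDl.
  rewrite <- (scalx0 (b + - a)). apply rle_scal. lra. exact Hx. Qed.
Lemma scal_pos a x : 0 <= a -> 0x ≼ x -> 0x ≼ a ⊙ x.
Proof. intros. rewrite <- (scalx0 a). apply rle_scal; auto. Qed.
Lemma le_scal_inv a x y : 0 < a -> a ⊙ x ≼ a ⊙ y -> x ≼ y.
Proof. intros Ha H. rewrite <- (rscal1 x), <- (rscal1 y).
  replace 1 with (/a * a) by (field; lra). rewrite <- !rscalA. apply rle_scal.
  left; apply Rinv_0_lt_compat, Ha. exact H. Qed.
Lemma le_sub_addr x y z : x ⊖ z ≼ y -> x ≼ y ⊕ z.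
Proof. intro H. rewrite <- (sub_add x z). apply rle_add, H. Qed.
Lemma le_add_subr x y z : x ⊕ z ≼ y -> x ≼ y ⊖ z.
Proof. intro H. rewrite <- (add_sub x z). apply rle_add, H. Qed.
Lemma le_subr_add x y z : x ≼ y ⊕ z -> x ⊖ z ≼ y.
Proof. intro H. rewrite <- (add_sub y z). apply rle_add, H. Qed.
Lemma le_addr_sub x y z : x ≼ y ⊖ z -> x ⊕ z ≼ y.
Proof. intro H. rewrite <- (sub_add y z). apply rle_add, H. Qed.
Lemma le_addr_pos x y : 0x ≼ y -> x ≼ x ⊕ y.
Proof. intro H. rewrite <- (radd0 x) at 1. apply le_addl, H. Qed.
Lemma le_subr_pos x y : 0x ≼ y -> x ⊖ y ≼ x.
Proof. intro H. apply le_subr_add, le_addr_pos, H. Qed.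
Lemma pos_sum x y : 0x ≼ x -> 0x ≼ y -> 0x ≼ x ⊕ y.
Proof. intros. rewrite <- (radd0 0x). apply le_add; auto. Qed.

Lemma sup_le x y z : x ≼ z -> y ≼ z -> x ⊔ y ≼ z. Proof. apply rsup_lub. Qed.
Lemma le_inf x y z : z ≼ x -> z ≼ y -> z ≼ x ⊓ y. Proof. apply rinf_glb. Qed.
Lemma supC x y : x ⊔ y = y ⊔ x.
Proof. apply rle_anti; apply sup_le; auto using rsup_ub1, rsup_ub2. Qed.
Lemma infC x y : x ⊓ y = y ⊓ x.
Proof. apply rle_anti; apply le_inf; auto using rinf_lb1, rinf_lb2. Qed.
Lemma sup_l x y : y ≼ x -> x ⊔ y = x.
Proof. intro. apply rle_anti. apply sup_le; auto using rle_refl. apply rsup_ub1. Qed.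
Lemma inf_l x y : x ≼ y -> x ⊓ y = x.
Proof. intro. apply rle_anti. apply rinf_lb1. apply le_inf; auto using rle_refl. Qed.
Lemma inf_mono x y x' y' : x ≼ x' -> y ≼ y' -> x ⊓ y ≼ x' ⊓ y'.
Proof. intros. apply le_inf. eapply rle_trans; [apply rinf_lb1|auto].
  eapply rle_trans; [apply rinf_lb2|auto]. Qed.
Lemma sup_mono x y x' y' : x ≼ x' -> y ≼ y' -> x ⊔ y ≼ x' ⊔ y'.
Proof. intros. apply sup_le. eapply rle_trans; [eauto|apply rsup_ub1].
  eapply rle_trans; [eauto|apply rsup_ub2]. Qed.
Lemma sup_addr x y z : (x ⊔ y) ⊕ z = (x ⊕ z) ⊔ (y ⊕ z).
Proof. apply rle_anti.
  - apply le_addr_sub. apply sup_le; apply le_add_subr; auto using rsup_ub1, rsup_ub2.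
  - apply sup_le; apply rle_add; auto using rsup_ub1, rsup_ub2. Qed.
Lemma inf_addr x y z : (x ⊓ y) ⊕ z = (x ⊕ z) ⊓ (y ⊕ z).
Proof. apply rle_anti.
  - apply le_inf; apply rle_add; auto using rinf_lb1, rinf_lb2.
  - apply le_sub_addr. apply le_inf; apply le_subr_add; auto using rinf_lb1, rinf_lb2. Qed.
Lemma inf_addl x y z : z ⊕ (x ⊓ y) = (z ⊕ x) ⊓ (z ⊕ y).
Proof. rewrite raddC, inf_addr, (raddC x), (raddC y). reflexivity. Qed.
Lemma sup_addl x y z : z ⊕ (x ⊔ y) = (z ⊕ x) ⊔ (z ⊕ y).
Proof. rewrite raddC, sup_addr, (raddC x), (raddC y). reflexivity. Qed.
Lemma opp_sup x y : opp (x ⊔ y) = opp x ⊓ opp y.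
Proof. apply rle_anti.
  - apply le_inf; apply le_opp; auto using rsup_ub1, rsup_ub2.
  - apply le_opp_inv. rewrite opp_opp. apply sup_le; apply le_opp_inv; rewrite opp_opp;
    auto using rinf_lb1, rinf_lb2. Qed.
Lemma opp_inf x y : opp (x ⊓ y) = opp x ⊔ opp y.
Proof. rewrite <- (opp_opp x) at 1. rewrite <- (opp_opp y) at 1. rewrite <- opp_sup, opp_opp. reflexivity. Qed.
Lemma sup_inf_sum x y : x ⊔ y ⊕ x ⊓ y = x ⊕ y.
Proof. apply (add_cancel_l _ _ (opp (x ⊔ y))). rewrite raddA, addNl, add0l.
  rewrite opp_sup, inf_addr.
  assert (E1 : opp x ⊕ (x ⊕ y) = y) by (rewrite raddA, addNl; apply add0l).
  assert (E2 : opp y ⊕ (x ⊕ y) = x) by (rewrite (raddC x y), raddA, addNl; apply add0l).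
  rewrite E1, E2. apply infC. Qed.

Notation rabs := (@rabs X).
Notation rpos := (@rpos X).

Lemma pos_ge0 x : 0x ≼ rpos x. Proof. apply rsup_ub2. Qed.
Lemma le_pos x : x ≼ rpos x. Proof. apply rsup_ub1. Qed.
Lemma le_abs x : x ≼ rabs x. Proof. apply rsup_ub1. Qed.
Lemma Nle_abs x : opp x ≼ rabs x. Proof. apply rsup_ub2. Qed.
Lemma two_scal x : 2 ⊙ x = x ⊕ x.
Proof. replace 2 with (1 + 1) by ring. rewrite rscalDl, rscal1. reflexivity. Qed.
Lemma abs_ge0 x : 0x ≼ rabs x.
Proof. apply (le_scal_inv 2). lra. rewrite scalx0, two_scal.
  rewrite <- (raddN x). apply le_add; [apply le_abs| apply Nle_abs]. Qed.
Lemma opp_le0 x : 0x ≼ x -> opp x ≼ 0x.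
Proof. intro H. rewrite <- opp0. apply le_opp, H. Qed.
Lemma abs_pos x : 0x ≼ x -> rabs x = x.
Proof. intro H. apply sup_l. eapply rle_trans; [apply opp_le0, H| exact H]. Qed.
Lemma abs0 : rabs 0x = 0x. Proof. apply abs_pos, rle_refl. Qed.
Lemma inf0l x : 0x ≼ x -> 0x ⊓ x = 0x. Proof. intro; apply inf_l; auto. Qed.
Lemma inf0r x : 0x ≼ x -> x ⊓ 0x = 0x. Proof. intro; rewrite infC; apply inf_l; auto. Qed.
Lemma inf_ge0 a b : 0x ≼ a -> 0x ≼ b -> 0x ≼ a ⊓ b. Proof. intros; apply le_inf; auto. Qed.
Lemma abs_triangle x y : rabs (x ⊕ y) ≼ rabs x ⊕ rabs y.
Proof. apply sup_le. apply le_add; apply le_abs.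
  rewrite opp_add. apply le_add; apply Nle_abs. Qed.
Lemma abs_scal a x : rabs (a ⊙ x) ≼ Rabs a ⊙ rabs x.
Proof. destruct (Rle_lt_dec 0 a) as [Ha|Ha].
  - rewrite Rabs_right by lra. apply sup_le. apply rle_scal; auto using le_abs.
    rewrite <- scal_opp. apply rle_scal; auto using Nle_abs.
  - rewrite Rabs_left by lra. apply sup_le.
    + replace (a ⊙ x) with ((-a) ⊙ opp x). apply rle_scal. lra. apply Nle_abs.
      rewrite scal_opp, opp_scal, opp_opp. reflexivity.
    + rewrite <- opp_scal. apply rle_scal. lra. apply le_abs. Qed.
Lemma pos_sub x : rpos x ⊖ x = rpos (opp x).
Proof. unfold rsub, Defs.rpos. rewrite sup_addr, raddN, add0l, supC. reflexivity. Qed.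
Lemma pos_neg_disj x : rpos x ⊓ rpos (opp x) = 0x.
Proof. rewrite <- pos_sub. unfold rsub.
  rewrite <- (radd0 (rpos x)) at 1. rewrite <- inf_addl.
  replace (0x ⊓ opp x) with (opp (rpos x)). apply raddN.
  unfold Defs.rpos. rewrite opp_sup, opp0, infC. reflexivity. Qed.
Lemma riesz_ineq a b c : 0x ≼ a -> 0x ≼ b -> 0x ≼ c -> (a ⊕ b) ⊓ c ≼ a ⊓ c ⊕ b ⊓ c.
Proof. intros Ha Hb Hc. rewrite inf_addr, !inf_addl.
  assert (H1 : (a ⊕ b) ⊓ c ≼ c) by apply rinf_lb2.
  apply le_inf; apply le_inf.
  - apply rinf_lb1.
  - eapply rle_trans; [exact H1|]. rewrite raddC. apply le_addr_pos, Ha.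
  - eapply rle_trans; [exact H1|]. apply le_addr_pos, Hb.
  - eapply rle_trans; [exact H1|]. apply le_addr_pos, Hc. Qed.
Lemma le0_of_disj z a b : z ≼ a -> z ≼ b -> a ⊓ b = 0x -> z ≼ 0x.
Proof. intros H1 H2 H3. rewrite <- H3. apply le_inf; auto. Qed.
Lemma disj_nat a b n : 0x ≼ a -> 0x ≼ b -> a ⊓ b = 0x -> (INR n ⊙ a) ⊓ b = 0x.
Proof. intros Ha Hb H. induction n.
  - simpl. rewrite scal0. apply inf0l, Hb.
  - rewrite S_INR, rscalDl, rscal1. apply rle_anti.
    + rewrite <- (radd0 0x), <- IHn, <- H at 1. apply riesz_ineq; auto.
      apply scal_pos; auto using pos_INR.
    + apply inf_ge0; auto. apply pos_sum; auto. apply scal_pos; auto using pos_INR. Qed.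
Lemma disj_scal a b c : 0 <= c -> 0x ≼ a -> 0x ≼ b -> a ⊓ b = 0x -> (c ⊙ a) ⊓ b = 0x.
Proof. intros Hc Ha Hb H. destruct (INR_unbounded c) as [n Hn].
  apply rle_anti.
  - rewrite <- (disj_nat a b n); auto. apply inf_mono; [|apply rle_refl].
    apply le_scal_r; auto; lra.
  - apply inf_ge0; auto. apply scal_pos; auto. Qed.

Definition disj (x y : X) := disjoint X x y.
Lemma disj_sym x y : disj x y -> disj y x.
Proof. unfold disj, disjoint. rewrite infC. auto. Qed.

Hypothesis HX : dedekind_complete X.

Lemma arch t u : (forall n, INR n ⊙ t ≼ u) -> t ≼ 0x.
Proof. intro H.
  destruct (HX (fun w => exists n, w = INR n ⊙ t)) as [s [Hs1 Hs2]].
  - exists (INR 0 ⊙ t); eauto.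
  - exists u. intros y [n ->]. apply H.
  - assert (s ≼ s ⊖ t). { apply Hs2. intros y [n ->]. apply le_add_subr.
      rewrite <- (rscal1 t) at 2. rewrite <- rscalDl, <- S_INR. apply Hs1. eauto. }
    apply le_addr_sub in H0. apply le_add2r with s. rewrite add0l, raddC. exact H0. Qed.

Lemma sup_pos_c s c : 0x ≼ c -> rpos s ⊔ c = s ⊔ c.
Proof. intro Hc. unfold Defs.rpos. apply rle_anti.
  - apply sup_le; [apply sup_le|]; auto using rsup_ub1, rsup_ub2.
    eapply rle_trans; [exact Hc| apply rsup_ub2].
  - apply sup_mono; auto using rle_refl, rsup_ub1. Qed.

Lemma inf_eq_sub a b : a ⊓ b = a ⊕ b ⊖ a ⊔ b.
Proof. rewrite <- sup_inf_sum. rewrite raddC. symmetry. apply add_sub. Qed.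

Lemma sub_le_r x y z : y ≼ z -> x ⊖ z ≼ x ⊖ y.
Proof. intro H. unfold rsub. apply le_addl, le_opp, H. Qed.
Lemma sub_addr_cancel a b c : a ⊕ c ⊖ (b ⊕ c) = a ⊖ b.
Proof. unfold rsub. rewrite opp_add, (raddC (opp b)), raddA, addK. reflexivity. Qed.

Lemma DB_band d : band X (fun b => disj b d).
Proof. unfold disj, disjoint.
  assert (Hd : 0x ≼ rabs d) by apply abs_ge0.
  split; [split; [split; [|split]|]|].
  - rewrite abs0. apply inf0l, Hd.
  - intros b1 b2 H1 H2. apply rle_anti; [|apply inf_ge0; auto using abs_ge0].
    eapply rle_trans. apply inf_mono. apply abs_triangle. apply rle_refl.
    rewrite <- (radd0 0x), <- H1 at 1. rewrite <- H2.
    apply riesz_ineq; auto using abs_ge0.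
  - intros a b H. apply rle_anti; [|apply inf_ge0; auto using abs_ge0].
    eapply rle_trans. apply inf_mono. apply abs_scal. apply rle_refl.
    rewrite disj_scal; auto using abs_ge0, rle_refl, Rabs_pos.
  - intros b y H Hy. apply rle_anti; [|apply inf_ge0; auto using abs_ge0].
    rewrite <- H. apply inf_mono; auto using rle_refl.
  - intros S s HS [Hs1 Hs2]. set (c := rabs d) in *.
    destruct (classic (exists y, S y)) as [[y0 Hy0]|Hne].
    + assert (Hyc : forall y, S y -> y ⊓ c ≼ 0x).
      { intros y Hy. rewrite <- (HS y Hy). apply inf_mono; auto using le_abs, rle_refl. }
      assert (Hsc : s ⊕ c ≼ s ⊔ c).
      { apply le_addr_sub. apply Hs2. intros y Hy. apply le_add_subr.
        eapply rle_trans; [|apply sup_mono; [apply Hs1, Hy| apply rle_refl]].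
        rewrite <- sup_inf_sum. rewrite <- (radd0 (y ⊔ c)) at 2. apply le_addl, Hyc, Hy. }
      assert (Hp : rpos s ⊓ c = 0x).
      { apply rle_anti; [|apply inf_ge0; auto using pos_ge0].
        apply le0_of_disj with (rpos s) (rpos (opp s)); [apply rinf_lb1| |apply pos_neg_disj].
        rewrite inf_eq_sub, sup_pos_c by exact Hd. rewrite <- pos_sub.
        rewrite <- (sub_addr_cancel (rpos s) s c). apply sub_le_r, Hsc. }
      assert (Hn : rpos (opp s) ⊓ c = 0x).
      { apply rle_anti; [|apply inf_ge0; auto using pos_ge0].
        rewrite <- (HS y0 Hy0). apply inf_mono; [|apply rle_refl].
        apply sup_le; [|apply abs_ge0]. eapply rle_trans; [|apply Nle_abs].
        apply le_opp, Hs1, Hy0. }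
      apply rle_anti; [|apply inf_ge0; auto using abs_ge0].
      eapply rle_trans. apply inf_mono. 2: apply rle_refl.
      instantiate (1 := rpos s ⊕ rpos (opp s)). apply sup_le.
      * eapply rle_trans; [apply le_pos|]. apply le_addr_pos, pos_ge0.
      * eapply rle_trans; [apply le_pos|]. rewrite raddC. apply le_addr_pos, pos_ge0.
      * rewrite <- (radd0 0x), <- Hp at 1. rewrite <- Hn. apply riesz_ineq; auto using pos_ge0.
    + assert (H0 : s ≼ s ⊖ c). { apply Hs2. intros y Hy. exfalso; eauto. }
      assert (c = 0x). { apply rle_anti; auto. apply le_opp_inv. rewrite opp0.
        apply le_add2r with s. rewrite add0l, raddC. exact H0. }
      rewrite H. apply inf0r, abs_ge0. Qed.

Lemma band_gen_disj w d b : disj w d -> band_gen X w b -> disj b d.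
Proof. intros H Hb. apply (Hb (fun b => disj b d)). apply DB_band. exact H. Qed.

Lemma band_gen_self w : band_gen X w w.
Proof. intros B _ H; exact H. Qed.

Lemma proj_exists w x : 0x ≼ w -> 0x ≼ x ->
  exists p, band_gen X w p /\ dcompl X (band_gen X w) (x ⊖ p).
Proof. intros Hw Hx.
  destruct (HX (fun z => exists n, z = x ⊓ (INR n ⊙ w))) as [p [Hp1 Hp2]].
  - exists (x ⊓ (INR 0 ⊙ w)); eauto.
  - exists x. intros y [n ->]. apply rinf_lb1.
  - exists p. split.
    + intros B HB HBw. apply (proj2 HB) with (fun z => exists n, z = x ⊓ (INR n ⊙ w)).
      2: split; auto.
      intros y [n ->]. destruct HB as [[[_ [_ Hsc]] Hsol] _].
      apply Hsol with (INR n ⊙ w). apply Hsc, HBw.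
      assert (0x ≼ INR n ⊙ w) by (apply scal_pos; auto using pos_INR).
      rewrite !abs_pos; auto using rinf_lb2. apply inf_ge0; auto.
    + assert (Hpx : p ≼ x) by (apply Hp2; intros y [n ->]; apply rinf_lb1).
      assert (Hxp : 0x ≼ x ⊖ p) by (apply le_sub, Hpx).
      intros b Hb. apply disj_sym. apply band_gen_disj with w; auto.
      unfold disj, disjoint. rewrite !abs_pos by auto.
      apply rle_anti; [|apply inf_ge0; auto].
      set (v := w ⊓ (x ⊖ p)).
      assert (Hv : forall n, x ⊓ (INR n ⊙ w) ⊕ v ≼ p).
      { intro n. eapply rle_trans; [|apply Hp1; exists (S n); reflexivity].
        apply le_inf.
        - apply rle_trans with (p ⊕ (x ⊖ p)). apply le_add.
          apply Hp1; eauto. apply rinf_lb2. rewrite raddC, sub_add. apply rle_refl.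
        - rewrite S_INR, rscalDl, rscal1. apply le_add. apply rinf_lb2. apply rinf_lb1. }
      assert (p ≼ p ⊖ v). { apply Hp2. intros y [n ->]. apply le_add_subr, Hv. }
      apply le_addr_sub in H. apply le_add2r with p. rewrite add0l, raddC. exact H. Qed.

Lemma P_spec w x : 0x ≼ w -> 0x ≼ x ->
  band_gen X w (P w x) /\ dcompl X (band_gen X w) (x ⊖ P w x).
Proof. intros Hw Hx. unfold P, band_proj.
  apply (epsilon_spec (inhabits 0x) (fun p => band_gen X w p /\ dcompl X (band_gen X w) (x ⊖ p))).
  apply proj_exists; auto. Qed.

Lemma sub_le0 x y : x ⊖ y ≼ 0x -> x ≼ y.
Proof. intro H. apply le_sub_addr in H. rewrite add0l in H. exact H. Qed.
Lemma le_sub0 x y : x ≼ y -> x ⊖ y ≼ 0x.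
Proof. intro H. rewrite <- (subxx y). apply rle_add, H. Qed.

Lemma decomp_pos x p : 0x ≼ x -> disj (x ⊖ p) p -> 0x ≼ p /\ 0x ≼ x ⊖ p.
Proof. intros Hx H. unfold disj, disjoint in H. split.
  - apply le_opp_inv. rewrite opp0. apply le0_of_disj with (rabs p) (rabs (x ⊖ p)).
    apply Nle_abs. 2: rewrite infC; exact H.
    eapply rle_trans; [|apply le_abs]. rewrite <- (add0l (opp p)). unfold rsub.
    apply rle_add, Hx.
  - apply le_opp_inv. rewrite opp0. apply le0_of_disj with (rabs p) (rabs (x ⊖ p)).
    2: apply Nle_abs. 2: rewrite infC; exact H.
    eapply rle_trans; [|apply le_abs]. rewrite opp_sub. apply le_subr_pos, Hx. Qed.

Lemma P_pos w x : 0x ≼ w -> 0x ≼ x -> 0x ≼ P w x /\ 0x ≼ x ⊖ P w x.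
Proof. intros Hw Hx. destruct (P_spec w x Hw Hx) as [H1 H2].
  apply decomp_pos; auto. apply H2, H1. Qed.

Lemma P_bound1 y e eps : 0x ≼ y -> 0x ≼ e -> 0 < eps ->
  eps ⊙ P (rpos (y ⊖ eps ⊙ e)) e ≼ y.
Proof. intros Hy He Heps. set (w := rpos (y ⊖ eps ⊙ e)). set (p := P w e).
  assert (Hw : 0x ≼ w) by apply pos_ge0.
  destruct (P_pos w e Hw He) as [Hp Hq].
  set (om := rpos (opp (y ⊖ eps ⊙ e))).
  assert (Hwo : disj w om).
  { unfold disj, disjoint. rewrite !abs_pos by apply pos_ge0. apply pos_neg_disj. }
  assert (Hpo : disj p om) by (apply band_gen_disj with w; auto; apply P_spec; auto).
  unfold disj, disjoint in Hpo. rewrite (abs_pos p Hp), (abs_pos om) in Hpo by apply pos_ge0.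
  apply sub_le0. apply le0_of_disj with (eps ⊙ p) om.
  - apply le_subr_pos, Hy.
  - eapply rle_trans; [|apply le_pos]. fold om. rewrite opp_sub.
    apply rle_add. apply rle_scal. lra. apply sub_le, Hq.
  - apply disj_scal; auto. lra. apply pos_ge0. Qed.

Lemma band_gen_sub w p n : band_gen X w p -> band_gen X w (w ⊖ INR n ⊙ p).
Proof. intros Hp B HB HBw. pose proof (Hp B HB HBw) as HBp.
  destruct HB as [[[_ [Hadd Hsc]] _] _].
  unfold rsub. rewrite <- scalN1. apply Hadd; auto. Qed.

Lemma P_bound2 y u e eps n : 0x ≼ y -> 0x ≼ u -> 0x ≼ e -> 0 < eps ->
  y ⊓ u ≼ INR n ⊙ P (rpos (y ⊖ eps ⊙ e)) e ⊕ rpos (u ⊖ INR n ⊙ e) ⊕ eps ⊙ e.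
Proof. intros Hy Hu He Heps. set (w := rpos (y ⊖ eps ⊙ e)). set (p := P w e).
  set (d := rpos (u ⊖ INR n ⊙ e)). set (m := y ⊓ u).
  assert (Hw : 0x ≼ w) by apply pos_ge0.
  destruct (P_spec w e Hw He) as [Hb Hc]. fold p in Hb, Hc.
  destruct (P_pos w e Hw He) as [Hp Hq]. fold p in Hp, Hq.
  assert (Hee : 0x ≼ eps ⊙ e) by (apply scal_pos; auto; lra).
  assert (Hd : 0x ≼ d) by apply pos_ge0.
  assert (Hn : 0 <= INR n) by apply pos_INR.
  set (z := w ⊖ INR n ⊙ p).
  assert (Hz : disj (e ⊖ p) z) by (apply Hc, band_gen_sub, Hb).
  unfold disj, disjoint in Hz. rewrite (abs_pos (e ⊖ p) Hq) in Hz.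
  assert (H : m ⊖ eps ⊙ e ⊖ d ⊖ INR n ⊙ p ≼ 0x).
  { apply le0_of_disj with (INR n ⊙ (e ⊖ p)) (rabs z).
    - rewrite scal_sub. apply rle_add.
      apply rle_trans with (m ⊖ d). apply rle_add, le_subr_pos, Hee.
      apply le_subr_add. eapply rle_trans; [apply rinf_lb2|]. rewrite raddC.
      apply le_sub_addr. apply le_pos.
    - eapply rle_trans; [|apply le_abs]. unfold z. apply rle_add.
      eapply rle_trans; [apply le_subr_pos, Hd|]. 
      eapply rle_trans; [|apply le_pos]. apply rle_add, rinf_lb1.
    - apply disj_scal; auto using abs_ge0. }
  apply le_sub_addr in H. apply le_sub_addr in H. apply le_sub_addr in H.
  rewrite add0l in H. exact H. Qed.
End Basic.

Section Nets.
Variable X : riesz.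
Notation "x ⊕ y" := (radd X x y) (at level 50, left associativity).
Notation "x ⊖ y" := (rsub x y) (at level 50, left associativity).
Notation "a ⊙ x" := (rscal X a x) (at level 40).
Notation "x ≼ y" := (rle X x y) (at level 70).
Notation "x ⊔ y" := (rsup X x y) (at level 45, left associativity).
Notation "x ⊓ y" := (rinf X x y) (at level 45, left associativity).
Notation opp := (ropp X).
Notation "0x" := (@rzero X).

Definition EB (A : directed) (f : A -> X) (z : X) : Prop :=
  exists a0, forall a, dle A a0 a -> rabs (f a ⊖ 0x) ≼ z.

Definition EBdir (A : directed) (f : A -> X) (z0 : X) (H : EB A f z0) : directed.
Proof.
  refine (@Directed {z : X | EB A f z} (fun z1 z2 => proj1_sig z2 ≼ proj1_sig z1) _ _ _ _).
  - intros [z Hz]; apply rle_refl.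
  - intros [a Ha] [b Hb] [c Hc]; simpl; intros; eapply rle_trans; eauto.
  - exact (inhabits (exist _ z0 H)).
  - intros [a [a0 Ha]] [b [b0 Hb]].
    assert (Hab : EB A f (a ⊓ b)).
    { destruct (dup A a0 b0) as [c0 [H1 H2]]. exists c0. intros c Hc.
      apply le_inf; [apply Ha | apply Hb]; eapply dle_trans; eauto. }
    exists (exist _ _ Hab). simpl. split; [apply rinf_lb1| apply rinf_lb2].
Defined.

Lemma oconv_intro (A : directed) (f : A -> X) :
  (exists z0, EB A f z0) ->
  (forall v, (forall z, EB A f z -> v ≼ z) -> v ≼ 0x) -> oconv A f 0x.
Proof. intros [z0 H0] Hv. exists (EBdir A f z0 H0), (@proj1_sig _ _). split; [split|].
  - intros [a Ha] [b Hb]; simpl; auto.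
  - split.
    + intros y [[z [a0 Hz]] ->]. simpl. eapply rle_trans; [apply abs_ge0| apply (Hz a0), dle_refl].
    + intros u Hu. apply Hv. intros z Hz. apply (Hu z). exists (exist _ z Hz). reflexivity.
  - intros [z [a0 Hz]]. exists a0. exact Hz. Qed.

Lemma oconv_elim (A : directed) (f : A -> X) : oconv A f 0x ->
  exists (B : directed) (z : B -> X), (forall b, EB A f (z b)) /\
     (forall v, (forall b, v ≼ z b) -> v ≼ 0x).
Proof. intros [B [z [[_ [_ Hi]] He]]]. exists B, z. split.
  - intro b. apply He.
  - intros v Hv. apply Hi. intros y [b ->]. apply Hv. Qed.

Lemma oconv_dom (A : directed) (f g : A -> X) K : 0 < K ->
  (forall a, 0x ≼ g a) -> (forall a, g a ≼ K ⊙ f a) -> oconv A f 0x -> oconv A g 0x.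
Proof. intros HK Hg Hgf Hf. destruct (oconv_elim A f Hf) as [B [z [Hz1 Hz2]]].
  assert (HE : forall b, EB A g (K ⊙ z b)).
  { intro b. destruct (Hz1 b) as [a0 Ha]. exists a0. intros a Ha0.
    rewrite sub0, abs_pos by auto. eapply rle_trans; [apply Hgf|].
    apply rle_scal. lra. eapply rle_trans; [|apply Ha, Ha0]. rewrite sub0. apply le_abs. }
  apply oconv_intro.
  - destruct (dinh B) as [b]. exists (K ⊙ z b). apply HE.
  - intros v Hv. apply (le_scal_inv X (/K)). apply Rinv_0_lt_compat, HK.
    rewrite scalx0. apply Hz2.
    intro b. apply (le_scal_inv X K). exact HK.
    rewrite rscalA. replace (K * /K) with 1 by (field; lra). rewrite rscal1.
    apply Hv, HE. Qed.

Definition natdir : directed.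
Proof. refine (@Directed nat le _ _ _ _).
  - apply Nat.le_refl. - apply Nat.le_trans. - exact (inhabits 0%nat).
  - intros a b. exists (Nat.max a b). split; [apply Nat.le_max_l|apply Nat.le_max_r]. Defined.
End Nets.

Section Main.
Variable X : riesz.
Notation "x ⊕ y" := (radd X x y) (at level 50, left associativity).
Notation "x ⊖ y" := (rsub x y) (at level 50, left associativity).
Notation "a ⊙ x" := (rscal X a x) (at level 40).
Notation "x ≼ y" := (rle X x y) (at level 70).
Notation "x ⊔ y" := (rsup X x y) (at level 45, left associativity).
Notation "x ⊓ y" := (rinf X x y) (at level 45, left associativity).
Notation opp := (ropp X).
Notation "0x" := (@rzero X).
Variable e : X.
Variable T : X -> X.
Hypothesis HX : dedekind_complete X.
Hypothesis He : weak_unit X e.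
Hypothesis HT : cond_exp T e.

Lemma T_add x y : T (x ⊕ y) = T x ⊕ T y. Proof. apply HT. Qed.
Lemma T_scal a x : T (a ⊙ x) = a ⊙ T x. Proof. apply HT. Qed.
Lemma T_e : T e = e. Proof. apply HT. Qed.
Lemma T_pos x : 0x ≼ x -> 0x ≼ T x. Proof. apply HT. Qed.
Lemma T_sub x y : T (x ⊖ y) = T x ⊖ T y.
Proof. unfold rsub. rewrite <- !scalN1, T_add, T_scal. reflexivity. Qed.
Lemma T_mono x y : x ≼ y -> T x ≼ T y.
Proof. intro H. apply sub_le. rewrite <- T_sub. apply T_pos, le_sub, H. Qed.
Lemma e_pos : 0x ≼ e. Proof. exact (proj1 He). Qed.

Lemma iii_i (A : directed) (y : A -> X) : (forall a, 0x ≼ y a) ->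
  oconv A (fun a => T (y a ⊓ e)) 0x ->
  forall eps, 0 < eps -> oconv A (fun a => T (P (rpos (y a ⊖ eps ⊙ e)) e)) 0x.
Proof. intros Hy H eps Heps. set (c := Rmin eps 1).
  assert (Hc : 0 < c) by (unfold c; apply Rmin_glb_lt; lra).
  apply (oconv_dom X A (fun a => T (y a ⊓ e)) _ (/c)). apply Rinv_0_lt_compat, Hc.
  - intro a. apply T_pos, P_pos; auto using pos_ge0, e_pos.
  - intro a. rewrite <- T_scal. apply T_mono.
    destruct (P_pos X HX (rpos (y a ⊖ eps ⊙ e)) e (pos_ge0 _ _) e_pos) as [Hp Hq].
    apply (le_scal_inv X c). exact Hc. rewrite rscalA. replace (c * /c) with 1 by (field; lra).
    rewrite rscal1. apply le_inf.
    + eapply rle_trans; [|apply (P_bound1 X HX (y a) e eps); auto using e_pos].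
      apply le_scal_r; auto. apply Rmin_l.
    + eapply rle_trans. apply le_scal_r. apply (Rmin_r eps 1). exact Hp.
      rewrite rscal1. apply sub_le, Hq.
  - exact H. Qed.

Lemma dn_inf u v : 0x ≼ u -> (forall n, v ≼ rpos (u ⊖ INR n ⊙ e)) -> v ≼ 0x.
Proof. intros Hu Hv. set (t := rpos v).
  assert (Ht : forall n, t ≼ rpos (u ⊖ INR n ⊙ e)) by (intro n; apply sup_le; auto using pos_ge0).
  set (t' := t ⊓ e).
  assert (Ht0 : 0x ≼ t') by (apply inf_ge0; [apply pos_ge0| apply e_pos]).
  assert (Ht' : t' ≼ 0x).
  { apply (arch X HX t' u). intro n. set (xx := u ⊖ INR n ⊙ e).
    apply sub_le0. apply le0_of_disj with (INR n ⊙ t') (rpos (opp xx)).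
    - apply le_subr_pos, Hu.
    - eapply rle_trans; [|apply le_pos]. unfold xx. rewrite opp_sub. apply rle_add.
      apply rle_scal. apply pos_INR. apply rinf_lb2.
    - apply disj_scal; auto using pos_INR, pos_ge0. apply rle_anti; [|apply inf_ge0; auto using pos_ge0].
      rewrite <- (pos_neg_disj X xx). apply inf_mono; auto using rle_refl.
      eapply rle_trans; [apply rinf_lb1|apply Ht]. }
  assert (Hte : disj X e t).
  { unfold disj, disjoint. rewrite (abs_pos X e e_pos), (abs_pos X t (pos_ge0 X v)). rewrite infC.
    apply rle_anti; [exact Ht'| exact Ht0]. }
  assert (Htt := band_gen_disj X e t t Hte (proj2 He t)).
  unfold disj, disjoint in Htt. rewrite inf_l in Htt by apply rle_refl.
  rewrite abs_pos in Htt by apply pos_ge0.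
  eapply rle_trans; [apply le_pos|]. fold t. rewrite Htt. apply rle_refl. Qed.

Lemma dn_conv u : 0x ≼ u -> oconv natdir (fun n => T (rpos (u ⊖ INR n ⊙ e))) 0x.
Proof. intro Hu. apply HT.
  assert (Hdec : forall n n', (n <= n')%nat -> rpos (u ⊖ INR n' ⊙ e) ≼ rpos (u ⊖ INR n ⊙ e)).
  { intros n n' Hn. apply sup_mono; [|apply rle_refl]. apply sub_le_r.
    apply le_scal_r. apply le_INR, Hn. apply e_pos. }
  exists natdir, (fun n => rpos (u ⊖ INR n ⊙ e)). split; [split|].
  - exact Hdec.
  - split.
    + intros y [b ->]. apply pos_ge0.
    + intros v Hv. apply (dn_inf u); auto. intro n. apply Hv. eauto.
  - intro b. exists b. intros a Hab. rewrite sub0, abs_pos by apply pos_ge0. apply Hdec, Hab. Qed.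

Lemma i_ii (A : directed) (y : A -> X) : (forall a, 0x ≼ y a) ->
  (forall eps, 0 < eps -> oconv A (fun a => T (P (rpos (y a ⊖ eps ⊙ e)) e)) 0x) ->
  forall u, 0x ≼ u -> oconv A (fun a => T (y a ⊓ u)) 0x.
Proof. intros Hy H u Hu. apply oconv_intro.
  - exists (T u). destruct (dinh A) as [a0]. exists a0. intros a _.
    rewrite sub0, abs_pos by (apply T_pos, inf_ge0; auto). apply T_mono, rinf_lb2.
  - intros v Hv. apply (arch X HX v e). intro n. destruct n.
    { simpl. rewrite scal0. apply e_pos. }
    set (eps := / INR (S n)).
    assert (HSn : 0 < INR (S n)) by (apply lt_0_INR; lia).
    assert (Heps : 0 < eps) by (apply Rinv_0_lt_compat, HSn).
    enough (Hve : v ⊖ eps ⊙ e ≼ 0x).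
    { apply sub_le0 in Hve. eapply rle_trans. apply rle_scal. left; exact HSn. exact Hve.
      rewrite rscalA. unfold eps. replace (INR (S n) * / INR (S n)) with 1 by (field; lra).
      rewrite rscal1. apply rle_refl. }
    destruct (oconv_elim X natdir _ (dn_conv u Hu)) as [B' [z' [Hz1' Hz2']]].
    destruct (oconv_elim X A _ (H eps Heps)) as [B [z [Hz1 Hz2]]].
    apply Hz2'. intro b'. destruct (Hz1' b') as [n0 Hn0].
    set (N := S n0).
    assert (HN : 0 < INR N) by (apply lt_0_INR; unfold N; lia).
    apply sub_le0.
    apply (le_scal_inv X (/INR N)). apply Rinv_0_lt_compat, HN. rewrite scalx0. apply Hz2. intro b.
    apply (le_scal_inv X (INR N)). exact HN. rewrite rscalA.
    replace (INR N * / INR N) with 1 by (field; lra). rewrite rscal1.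
    apply le_subr_add, le_subr_add. apply Hv.
    destruct (Hz1 b) as [a0 Ha0]. exists a0. intros a Ha.
    rewrite sub0, abs_pos by (apply T_pos, inf_ge0; auto).
    eapply rle_trans. apply T_mono, (P_bound2 X HX (y a) u e eps N); auto using e_pos.
    rewrite !T_add, !T_scal, T_e. apply le_add; [apply le_add|apply rle_refl].
    + apply rle_scal. apply pos_INR. eapply rle_trans; [|apply Ha0, Ha]. rewrite sub0; apply le_abs.
    + eapply rle_trans; [|apply (Hn0 N); simpl; unfold N; lia]. rewrite sub0; apply le_abs. Qed.
End Main.

Theorem mainTheorem9 (X : riesz) (e : X) (T : X -> X)
  (HX : dedekind_complete X) (He : weak_unit X e) (HT : cond_exp T e)
  (A : directed) (x : A -> X) (l : X) :
  (cp_conv T e A x l <->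
     (forall u : X, rle X rzero u ->
        oconv A (fun a => T (rinf X (rabs (rsub (x a) l)) u)) rzero)) /\
  ((forall u : X, rle X rzero u ->
        oconv A (fun a => T (rinf X (rabs (rsub (x a) l)) u)) rzero) <->
     oconv A (fun a => T (rinf X (rabs (rsub (x a) l)) e)) rzero).
Proof.
  assert (Hy : forall a, rle X rzero (rabs (rsub (x a) l))) by (intro; apply abs_ge0).
  assert (H12 := i_ii X e T HX He HT A _ Hy).
  assert (H31 := iii_i X e T HX He HT A _ Hy).
  assert (He0 : rle X rzero e) by exact (proj1 He).
  unfold cp_conv. split; split; intro H.
  - apply H12, H.
  - apply H31, H, He0.
  - apply H, He0.
  - apply H12, H31, H.
Qed.
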